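(* Let $r>2$ and $p(z_1,z_2)=1-\frac{z_1+z_2}{r}$. For $(k_1,k_2)\in\mathbb{Z}^2$ let $$c_{k_1,k_2}=\frac{1}{4\pi^2}\int_0^{2\pi}\!\!\int_0^{2\pi}\frac{e^{-i(k_1\theta_1+k_2\theta_2)}}{|p(e^{i\theta_1},e^{i\theta_2})|^2}\,d\theta_1\,d\theta_2$$ be the Fourier coefficients of the spectral density function $1/|p|^2$ on the torus $\mathbb{T}^2$. Then $$c_{k_1,k_2}=\frac{1}{\sqrt{1-\frac{4}{r^2}}}\left(\frac r2-\sqrt{\frac{r^2}{4}-1}\right)^{|k_1|+|k_2|}\quad\text{if } k_1k_2\le 0,$$ and $$c_{k_1,k_2}=\frac{\binom{|k_1|+|k_2|}{|k_1|}}{r^{|k_1|+|k_2|}}\;{}_3F_2\!\left(\begin{matrix}1,\ \frac{|k_1|+|k_2|}{2}+1,\ \frac{|k_1|+|k_2|+1}{2}\\ |k_1|+1,\ |k_2|+1\end{matrix};\frac{4}{r^2}\right)\quad\text{if } k_1k_2>0.$$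
   Context: For $|x|<1$, ${}_3F_2\!\left(\begin{matrix}a,b,c\\ d,e\end{matrix};x\right)=\sum_{n=0}^\infty\frac{(a)_n(b)_n(c)_n}{(d)_n(e)_n}\frac{x^n}{n!}$, where $(q)_0=1$ and $(q)_n=q(q+1)\cdots(q+n-1)$ for $n\ge1$ (Pochhammer symbol). $\mathbb{T}=\{w\in\mathbb{C}:|w|=1\}$. *)

(* Defs.v *)
From Stdlib Require Import Reals ZArith.
From Coquelicot Require Import Coquelicot.
Open Scope R_scope.

Definition expi (t : R) : C := (cos t, sin t).

Definition p_poly (r : R) (z1 z2 : C) : C :=
  Cminus (RtoC 1) (Cdiv (Cplus z1 z2) (RtoC r)).

Definition spec_density (r t1 t2 : R) : R :=
  / (Cmod (p_poly r (expi t1) (expi t2)) ^ 2).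

(* Fourier coefficient c_{k1,k2}, as an iterated Riemann integral
   (the integrand is continuous on [0,2pi]^2 since r > 2). *)
Definition fourier_coef (r : R) (k1 k2 : Z) : C :=
  Cmult (RtoC (/ (4 * PI ^ 2)))
    (RInt (V := C_R_CompleteNormedModule)
      (fun t1 => RInt (V := C_R_CompleteNormedModule)
         (fun t2 => Cmult (expi (- (IZR k1 * t1 + IZR k2 * t2)))
                          (RtoC (spec_density r t1 t2)))
         0 (2 * PI))
      0 (2 * PI)).

Fixpoint poch (q : R) (n : nat) : R :=
  match n with
  | O => 1
  | S m => poch q m * (q + INR m)
  end.

Definition hyp3F2 (a b c d e x : R) : R :=
  Series (fun n => poch a n * poch b n * poch c n / (poch d n * poch e n)
                   * x ^ n / INR (fact n)).

(* Main.v *)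
Require Import Defs.
From Stdlib Require Import Reals ZArith.
From Coquelicot Require Import Coquelicot.
From Stdlib Require Import Lra Lia.
Open Scope R_scope.

Lemma sin_2pi_int (j : Z) : sin (2 * PI * IZR j) = 0.
Proof. apply sin_eq_0_1. exists (2*j)%Z. rewrite mult_IZR. simpl. ring. Qed.

Lemma cos_2pi_int (j : Z) : cos (2 * PI * IZR j) = 1.
Proof.
  replace (2 * PI * IZR j) with (2 * (PI * IZR j)) by ring.
  rewrite cos_2a_sin. rewrite (sin_eq_0_1 (PI * IZR j)). ring.
  exists j. ring.
Qed.

Lemma cont_lin a c x : continuous (fun t => a*t+c) x.
Proof. apply (ex_derive_continuous (fun t => a*t+c)). auto_derive. auto. Qed.

Lemma int_cos (j : Z) (c : R) :
  is_RInt (fun t => cos (IZR j * t + c)) 0 (2*PI)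
    (if Z.eq_dec j 0 then 2*PI*cos c else 0).
Proof.
  destruct (Z.eq_dec j 0) as [->|Hj].
  - replace (2*PI*cos c) with (scal (2*PI - 0) (cos c)).
    eapply is_RInt_ext; [|exact (is_RInt_const (V:=R_NormedModule) 0 (2*PI) (cos c))].
    intros x _. simpl. f_equal. ring.
    unfold scal; simpl; unfold mult; simpl. ring.
  - assert (Hj' : IZR j <> 0) by (apply not_0_IZR; exact Hj).
    set (F := fun t => sin (IZR j * t + c) / IZR j).
    assert (H := is_RInt_derive (V:=R_CompleteNormedModule) F (fun t => cos (IZR j * t + c)) 0 (2*PI)).
    assert (E : minus (F (2*PI)) (F 0) = 0).
    { unfold F, minus, plus, opp; simpl.
      replace (IZR j * (2*PI) + c) with (c + 2*PI*IZR j) by ring.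
      rewrite sin_plus, sin_2pi_int, cos_2pi_int.
      replace (IZR j * 0 + c) with c by ring. field. auto. }
    rewrite <- E at 2. apply H.
    + intros x _. unfold F. auto_derive; auto. field. auto.
    + intros x _. apply continuous_cos_comp.
      apply cont_lin.
Qed.

Lemma int_sin (j : Z) (c : R) :
  is_RInt (fun t => sin (IZR j * t + c)) 0 (2*PI)
    (if Z.eq_dec j 0 then 2*PI*sin c else 0).
Proof.
  destruct (Z.eq_dec j 0) as [->|Hj].
  - replace (2*PI*sin c) with (scal (2*PI - 0) (sin c)).
    eapply is_RInt_ext; [|exact (is_RInt_const (V:=R_NormedModule) 0 (2*PI) (sin c))].
    intros x _. simpl. f_equal. ring.
    unfold scal; simpl; unfold mult; simpl. ring.
  - assert (Hj' : IZR j <> 0) by (apply not_0_IZR; exact Hj).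
    set (F := fun t => - cos (IZR j * t + c) / IZR j).
    assert (H := is_RInt_derive (V:=R_CompleteNormedModule) F (fun t => sin (IZR j * t + c)) 0 (2*PI)).
    assert (E : minus (F (2*PI)) (F 0) = 0).
    { unfold F, minus, plus, opp; simpl.
      replace (IZR j * (2*PI) + c) with (c + 2*PI*IZR j) by ring.
      rewrite cos_plus, sin_2pi_int, cos_2pi_int.
      replace (IZR j * 0 + c) with c by ring. field. auto. }
    rewrite <- E at 2. apply H.
    + intros x _. unfold F. auto_derive; auto. field. auto.
    + intros x _. apply continuous_sin_comp. apply cont_lin.
Qed.

Notation CV := C_R_CompleteNormedModule.

Lemma is_RInt_C (f : R -> C) a b x y :
  is_RInt (fun t => fst (f t)) a b x -> is_RInt (fun t => snd (f t)) a b y ->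
  is_RInt (V := CV) f a b (x,y).
Proof. intros H1 H2. exact (@is_RInt_fct_extend_pair R_NormedModule R_NormedModule f a b x y H1 H2). Qed.

Lemma is_RInt_C1 (f : R -> C) a b l :
  is_RInt (V := CV) f a b l -> is_RInt (fun t => fst (f t)) a b (fst l).
Proof. intros H. exact (@is_RInt_fct_extend_fst R_NormedModule R_NormedModule f a b l H). Qed.

Lemma is_RInt_C2 (f : R -> C) a b l :
  is_RInt (V := CV) f a b l -> is_RInt (fun t => snd (f t)) a b (snd l).
Proof. intros H. exact (@is_RInt_fct_extend_snd R_NormedModule R_NormedModule f a b l H). Qed.

Lemma is_RInt_R_lin (f g : R -> R) a b x y (u v : R) :
  is_RInt f a b x -> is_RInt g a b y ->
  is_RInt (fun t => u * f t + v * g t) a b (u * x + v * y).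
Proof.
  intros H1 H2.
  apply (is_RInt_plus (V:=R_NormedModule) (fun t => u * f t) (fun t => v * g t)).
  apply (is_RInt_scal (V:=R_NormedModule) f a b u x H1).
  apply (is_RInt_scal (V:=R_NormedModule) g a b v y H2).
Qed.

Lemma is_RInt_Cscal (f : R -> C) a b (c l : C) :
  is_RInt (V:=CV) f a b l -> is_RInt (V:=CV) (fun t => (c * f t)%C) a b (c * l)%C.
Proof.
  intros H. destruct c as [c1 c2]. destruct l as [l1 l2].
  assert (H1 := is_RInt_C1 _ _ _ _ H). assert (H2 := is_RInt_C2 _ _ _ _ H).
  simpl in H1, H2.
  replace ((c1,c2) * (l1,l2))%C with (c1 * l1 + (- c2) * l2, c1 * l2 + c2 * l1).
  2:{ unfold Cmult; simpl. f_equal; ring. }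
  apply is_RInt_C.
  - eapply is_RInt_ext; [|apply (is_RInt_R_lin _ _ _ _ _ _ c1 (-c2) H1 H2)].
    intros x _. unfold Cmult; simpl. ring.
  - eapply is_RInt_ext; [|apply (is_RInt_R_lin _ _ _ _ _ _ c1 c2 H2 H1)].
    intros x _. unfold Cmult; simpl. ring.
Qed.

Lemma is_RInt_Cplus (f g : R -> C) a b (l m : C) :
  is_RInt (V:=CV) f a b l -> is_RInt (V:=CV) g a b m ->
  is_RInt (V:=CV) (fun t => (f t + g t)%C) a b (l + m)%C.
Proof. intros H1 H2. exact (is_RInt_plus (V:=CV) f g a b l m H1 H2). Qed.

Definition expi' (t : R) : C := (cos t, sin t).

Lemma int_expi (j : Z) (c : R) :
  is_RInt (V:=CV) (fun t => (cos (IZR j * t + c), sin (IZR j * t + c))) 0 (2*PI)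
    (if Z.eq_dec j 0 then (2*PI*cos c, 2*PI*sin c) else (0,0)).
Proof.
  assert (H1 := int_cos j c). assert (H2 := int_sin j c).
  destruct (Z.eq_dec j 0); apply is_RInt_C; simpl; assumption.
Qed.

Definition is_RInt2 (Phi : R -> R -> C) (I : C) :=
  exists F : R -> C, (forall t1, is_RInt (V:=CV) (Phi t1) 0 (2*PI) (F t1)) /\
                     is_RInt (V:=CV) F 0 (2*PI) I.

Lemma is_RInt2_ext Phi Psi I :
  (forall t1 t2, Phi t1 t2 = Psi t1 t2) -> is_RInt2 Phi I -> is_RInt2 Psi I.
Proof.
  intros E [F [H1 H2]]. exists F. split; auto.
  intros t1. eapply is_RInt_ext; [|apply H1]. intros; apply E.
Qed.

Lemma is_RInt2_plus Phi Psi I J :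
  is_RInt2 Phi I -> is_RInt2 Psi J -> is_RInt2 (fun t1 t2 => (Phi t1 t2 + Psi t1 t2)%C) (I + J)%C.
Proof.
  intros [F [H1 H2]] [G [G1 G2]]. exists (fun t => (F t + G t)%C). split.
  - intros t1. apply is_RInt_Cplus; auto.
  - apply is_RInt_Cplus; auto.
Qed.

Lemma is_RInt2_scal Phi I c :
  is_RInt2 Phi I -> is_RInt2 (fun t1 t2 => (c * Phi t1 t2)%C) (c * I)%C.
Proof.
  intros [F [H1 H2]]. exists (fun t => (c * F t)%C). split.
  - intros t1. apply is_RInt_Cscal; auto.
  - apply is_RInt_Cscal; auto.
Qed.

Lemma is_RInt2_base (k1 k2 : Z) :
  is_RInt2 (fun t1 t2 => expi (- (IZR k1 * t1 + IZR k2 * t2)))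
    (RtoC (4 * PI^2 * (if (Z.eqb k1 0 && Z.eqb k2 0)%bool then 1 else 0))).
Proof.
  destruct (Z.eq_dec k2 0) as [->|Hk2].
  - exists (fun t1 => ((2*PI) * cos (IZR (-k1) * t1 + 0), (2*PI) * sin (IZR (-k1) * t1 + 0))).
    split.
    + intros t1. eapply is_RInt_ext.
      2:{ assert (H := int_expi 0 (IZR (-k1) * t1 + 0)).
          destruct (Z.eq_dec 0 0) as [_|n]; [exact H| now elim n]. }
      intros x _. unfold expi. rewrite opp_IZR. f_equal; f_equal; ring.
    + assert (H := is_RInt_Cscal _ 0 (2*PI) (RtoC (2*PI)) _ (int_expi (-k1) 0)).
      assert (E : (RtoC (2*PI) * (if Z.eq_dec (- k1) 0 then ((2 * PI * cos 0)%R, (2 * PI * sin 0)%R) else (0%R,0%R)))%C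
          = RtoC (4 * PI ^ 2 * (if ((k1 =? 0)%Z && (0 =? 0)%Z)%bool then 1 else 0))).
      { destruct (Z.eq_dec (-k1) 0) as [e|n].
        * assert (k1 = 0%Z) by lia. subst. simpl. rewrite cos_0, sin_0.
          unfold Cmult, RtoC; simpl. f_equal; ring.
        * assert (Z.eqb k1 0 = false) by (apply Z.eqb_neq; lia). rewrite H0. simpl.
          unfold Cmult, RtoC; simpl. f_equal; ring. }
      rewrite <- E. eapply is_RInt_ext; [|exact H]. intros x _. 
      unfold Cmult, RtoC; simpl. f_equal; ring.
  - exists (fun _ => RtoC 0). split.
    + intros t1. eapply is_RInt_ext.
      2:{ assert (H := int_expi (-k2) (- (IZR k1 * t1))).
          destruct (Z.eq_dec (-k2) 0) as [e|_]; [lia|exact H]. }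
      intros x _. unfold expi. rewrite opp_IZR. f_equal; f_equal; ring.
    + assert (E : scal (2*PI - 0) (RtoC 0) = RtoC (4 * PI ^ 2 * (if ((k1 =? 0)%Z && (k2 =? 0)%Z)%bool then 1 else 0))).
      { assert (Z.eqb k2 0 = false) by (apply Z.eqb_neq; lia). rewrite H.
        rewrite Bool.andb_false_r. unfold scal; simpl. unfold RtoC. unfold prod_scal. simpl. unfold mult; simpl. f_equal; unfold scal; simpl; unfold mult; simpl; ring. }
      rewrite <- E. apply (is_RInt_const (V:=CV)).
Qed.

Fixpoint Cz (M : nat) (K : Z) : R :=
  match M with
  | O => if Z.eqb K 0 then 1 else 0
  | S M' => Cz M' K + Cz M' (K - 1)
  end.

Definition Bc (m n : nat) (k1 k2 : Z) : R :=
  if Z.eqb (Z.of_nat m - Z.of_nat n) (k1 + k2) then Cz (m + n) (Z.of_nat n + k1) else 0.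

Definition Phi (m n : nat) (k1 k2 : Z) (t1 t2 : R) : C :=
  (expi (- (IZR k1 * t1 + IZR k2 * t2)) * Cpow (expi t1 + expi t2) m
     * Cpow (expi (- t1) + expi (- t2)) n)%C.

Lemma expi_mult a b : (expi a * expi b)%C = expi (a + b).
Proof. unfold expi, Cmult; simpl. rewrite cos_plus, sin_plus. f_equal; ring. Qed.

Lemma RtoC_plus' a b : RtoC (a + b) = (RtoC a + RtoC b)%C.
Proof. unfold RtoC, Cplus; simpl. f_equal; ring. Qed.

Lemma Bc_00 k1 k2 : Bc 0 0 k1 k2 = if (Z.eqb k1 0 && Z.eqb k2 0)%bool then 1 else 0.
Proof.
  unfold Bc. simpl Cz. replace (Z.of_nat 0 + k1)%Z with k1 by (simpl; ring).
  destruct (Z.eqb_spec (Z.of_nat 0 - Z.of_nat 0) (k1 + k2)); destruct (Z.eqb_spec k1 0); destruct (Z.eqb_spec k2 0);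
  simpl; try reflexivity; lia.
Qed.

Lemma Bc_Sm m n k1 k2 : Bc (S m) n k1 k2 = Bc m n (k1 - 1) k2 + Bc m n k1 (k2 - 1).
Proof.
  unfold Bc. rewrite Nat2Z.inj_succ.
  destruct (Z.eqb_spec (Z.succ (Z.of_nat m) - Z.of_nat n) (k1 + k2));
  destruct (Z.eqb_spec (Z.of_nat m - Z.of_nat n) (k1 - 1 + k2));
  destruct (Z.eqb_spec (Z.of_nat m - Z.of_nat n) (k1 + (k2 - 1))); try lia.
  - simpl. replace (Z.of_nat n + (k1 - 1))%Z with (Z.of_nat n + k1 - 1)%Z by ring. ring.
  - ring.
Qed.

Lemma Bc_Sn n k1 k2 : Bc 0 (S n) k1 k2 = Bc 0 n (k1 + 1) k2 + Bc 0 n k1 (k2 + 1).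
Proof.
  unfold Bc. rewrite Nat2Z.inj_succ.
  destruct (Z.eqb_spec (Z.of_nat 0 - Z.succ (Z.of_nat n)) (k1 + k2));
  destruct (Z.eqb_spec (Z.of_nat 0 - Z.of_nat n) (k1 + 1 + k2));
  destruct (Z.eqb_spec (Z.of_nat 0 - Z.of_nat n) (k1 + (k2 + 1))); try lia.
  - simpl. replace (Z.of_nat n + (k1 + 1))%Z with (Z.succ (Z.of_nat n) + k1)%Z by ring.
    replace (Z.of_nat n + k1)%Z with (Z.succ (Z.of_nat n) + k1 - 1)%Z by ring. ring.
  - ring.
Qed.

Lemma Phi_Sm m n k1 k2 t1 t2 :
  Phi (S m) n k1 k2 t1 t2 = (Phi m n (k1 - 1) k2 t1 t2 + Phi m n k1 (k2 - 1) t1 t2)%C.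
Proof.
  unfold Phi. simpl Cpow.
  assert (E1 : (expi (- (IZR k1 * t1 + IZR k2 * t2)) * expi t1)%C = expi (- (IZR (k1 - 1) * t1 + IZR k2 * t2))).
  { rewrite expi_mult, minus_IZR. f_equal. ring. }
  assert (E2 : (expi (- (IZR k1 * t1 + IZR k2 * t2)) * expi t2)%C = expi (- (IZR k1 * t1 + IZR (k2 - 1) * t2))).
  { rewrite expi_mult, minus_IZR. f_equal. ring. }
  rewrite <- E1, <- E2. ring.
Qed.

Lemma Phi_Sn n k1 k2 t1 t2 :
  Phi 0 (S n) k1 k2 t1 t2 = (Phi 0 n (k1 + 1) k2 t1 t2 + Phi 0 n k1 (k2 + 1) t1 t2)%C.
Proof.
  unfold Phi. simpl Cpow.
  assert (E1 : (expi (- (IZR k1 * t1 + IZR k2 * t2)) * expi (- t1))%C = expi (- (IZR (k1 + 1) * t1 + IZR k2 * t2))).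
  { rewrite expi_mult, plus_IZR. f_equal. ring. }
  assert (E2 : (expi (- (IZR k1 * t1 + IZR k2 * t2)) * expi (- t2))%C = expi (- (IZR k1 * t1 + IZR (k2 + 1) * t2))).
  { rewrite expi_mult, plus_IZR. f_equal. ring. }
  rewrite <- E1, <- E2. ring.
Qed.

Lemma is_RInt2_Phi m n k1 k2 :
  is_RInt2 (Phi m n k1 k2) (RtoC (4 * PI^2 * Bc m n k1 k2)).
Proof.
  revert n k1 k2. induction m as [|m IHm].
  - induction n as [|n IHn]; intros k1 k2.
    + rewrite Bc_00. eapply is_RInt2_ext; [|apply is_RInt2_base].
      intros t1 t2. unfold Phi. simpl. ring.
    + rewrite Bc_Sn, Rmult_plus_distr_l, RtoC_plus'.
      eapply is_RInt2_ext; [|apply is_RInt2_plus; [apply (IHn (k1+1)%Z k2)|apply (IHn k1 (k2+1)%Z)]].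
      intros t1 t2. rewrite Phi_Sn. reflexivity.
  - intros n k1 k2.
    rewrite Bc_Sm, Rmult_plus_distr_l, RtoC_plus'.
    eapply is_RInt2_ext; [|apply is_RInt2_plus; [apply (IHm n (k1-1)%Z k2)|apply (IHm n k1 (k2-1)%Z)]].
    intros t1 t2. rewrite Phi_Sm. reflexivity.
Qed.

Lemma normCV (z : C) : norm (K:=R_AbsRing) (V:=C_R_NormedModule) z = Cmod z.
Proof. unfold norm; simpl. unfold prod_norm. simpl. unfold Cmod.
  destruct z as [a b]; simpl. f_equal. change (norm a) with (Rabs a). change (norm b) with (Rabs b).
  rewrite !Rmult_1_r. rewrite <- !Rabs_mult. rewrite !Rabs_right by (apply Rle_ge; apply Rle_0_sqr). ring.
Qed.

Lemma minusCV (x y : C) : minus (G:=CV) y x = (y - x)%C.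
Proof. reflexivity. Qed.

Lemma ball_C (x y : C) (e : R) : Cmod (y - x) < e -> ball (M:=CV) x e y.
Proof. intros H. apply (norm_compat1 (V:=CV)). rewrite minusCV, normCV. exact H. Qed.

Lemma unif_lim (g : R -> C) (gn : nat -> R -> C) (In : nat -> C) (eps : nat -> R) a b :
  (forall n, is_RInt (V:=CV) (gn n) a b (In n)) ->
  (forall n t, Cmod (gn n t - g t) <= eps n) -> is_lim_seq eps 0 ->
  exists I, is_RInt (V:=CV) g a b I /\ filterlim In eventually (locally I).
Proof.
  intros HI Hb Hl.
  destruct (filterlim_RInt (V:=CV) gn a b eventually eventually_filter g In HI) as [I [H1 H2]].
  - intros P [e He]. apply is_lim_seq_spec in Hl. destruct (Hl e) as [N HN].
    exists N. intros n Hn. apply He. intros t. apply ball_C.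
    specialize (HN n Hn). rewrite Rminus_0_r in HN.
    eapply Rle_lt_trans; [apply Hb|]. eapply Rle_lt_trans; [apply Rle_abs|exact HN].
  - exists I. split; assumption.
Qed.

Lemma seq_lim_C (In : nat -> C) (l : C) (d : nat -> R) :
  (forall n, Cmod (In n - l) <= d n) -> is_lim_seq d 0 ->
  filterlim In eventually (locally l).
Proof.
  intros Hb Hl P [e He]. apply is_lim_seq_spec in Hl. destruct (Hl e) as [N HN].
  exists N. intros n Hn. apply He. apply ball_C.
  specialize (HN n Hn). rewrite Rminus_0_r in HN.
  eapply Rle_lt_trans; [apply Hb|]. eapply Rle_lt_trans; [apply Rle_abs|exact HN].
Qed.

Lemma unif_lim2 (Phi : R -> R -> C) (Phin : nat -> R -> R -> C) (In : nat -> C) (eps : nat -> R) :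
  (forall n, is_RInt2 (Phin n) (In n)) ->
  (forall n t1 t2, Cmod (Phin n t1 t2 - Phi t1 t2) <= eps n) -> is_lim_seq eps 0 ->
  exists I, (forall t1, is_RInt (V:=CV) (Phi t1) 0 (2*PI) (RInt (V:=CV) (Phi t1) 0 (2*PI)))
     /\ is_RInt (V:=CV) (fun t1 => RInt (V:=CV) (Phi t1) 0 (2*PI)) 0 (2*PI) I
     /\ filterlim In eventually (locally I).
Proof.
  intros HI Hb Hl.
  assert (Hin : forall n t1, is_RInt (V:=CV) (Phin n t1) 0 (2*PI) (RInt (V:=CV) (Phin n t1) 0 (2*PI))).
  { intros n t1. destruct (HI n) as [F [H1 H2]].
    rewrite (is_RInt_unique _ _ _ _ (H1 t1)). apply H1. }
  assert (Hphi : forall t1, is_RInt (V:=CV) (Phi t1) 0 (2*PI) (RInt (V:=CV) (Phi t1) 0 (2*PI))).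
  { intros t1. destruct (unif_lim (Phi t1) (fun n => Phin n t1) (fun n => RInt (V:=CV) (Phin n t1) 0 (2*PI)) eps 0 (2*PI)) as [I [H1 _]]; auto.
    rewrite (is_RInt_unique _ _ _ _ H1). exact H1. }
  destruct (unif_lim (fun t1 => RInt (V:=CV) (Phi t1) 0 (2*PI)) (fun n t1 => RInt (V:=CV) (Phin n t1) 0 (2*PI)) In (fun n => 2*PI * eps n) 0 (2*PI)) as [I [H1 H2]].
  - intros n. destruct (HI n) as [F [F1 F2]].
    eapply is_RInt_ext; [|exact F2]. intros x _. symmetry. apply is_RInt_unique. apply F1.
  - intros n t1.
    assert (Hm := is_RInt_minus (V:=CV) _ _ _ _ _ _ (Hin n t1) (Hphi t1)).
    assert (Hc := is_RInt_const (V:=R_NormedModule) 0 (2*PI) (eps n)).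
    assert (HP : 0 <= 2 * PI) by (pose proof PI_RGT_0; lra).
    assert (Hb' : forall x, 0 <= x <= 2*PI -> norm (minus (G:=CV) (Phin n t1 x) (Phi t1 x)) <= eps n).
    { intros x _. rewrite minusCV, normCV. apply Hb. }
    assert (Hn := norm_RInt_le (V:=CV) _ _ _ _ _ _ HP Hb' Hm Hc).
    rewrite minusCV, normCV in Hn.
    eapply Rle_trans; [exact Hn| right; change (scal (2 * PI - 0) (eps n)) with ((2*PI-0) * eps n); ring].
  - replace (Finite 0) with (Rbar_mult (2*PI) 0) by (simpl; f_equal; ring).
    apply is_lim_seq_scal_l. exact Hl.
  - exists I. auto.
Qed.

Fixpoint csum (f : nat -> C) (N : nat) : C :=
  match N with O => RtoC 0 | S n => (csum f n + f n)%C end.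
Fixpoint rsum (f : nat -> R) (N : nat) : R :=
  match N with O => 0 | S n => rsum f n + f n end.

Lemma csum_ext f g N : (forall i, f i = g i) -> csum f N = csum g N.
Proof. intros H; induction N; simpl; [reflexivity|rewrite IHN, H; reflexivity]. Qed.
Lemma csum_mult_l z f N : (z * csum f N)%C = csum (fun i => z * f i)%C N.
Proof. induction N; simpl. ring. rewrite <- IHN. ring. Qed.
Lemma csum_mult_r z f N : (csum f N * z)%C = csum (fun i => f i * z)%C N.
Proof. induction N; simpl. ring. rewrite <- IHN. ring. Qed.
Lemma csum_conj f N : Cconj (csum f N) = csum (fun i => Cconj (f i)) N.
Proof. induction N; simpl. unfold Cconj, RtoC; simpl; f_equal; ring. rewrite Cplus_conj, IHN. reflexivity. Qed.
Lemma Cpow_conj z n : Cconj (Cpow z n) = Cpow (Cconj z) n.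
Proof. induction n; simpl. unfold Cconj, RtoC; simpl; f_equal; ring. rewrite Cmult_conj, IHn. reflexivity. Qed.
Lemma RtoC_rsum f N : RtoC (rsum f N) = csum (fun i => RtoC (f i)) N.
Proof. induction N; simpl. reflexivity. rewrite <- IHN. unfold RtoC, Cplus; simpl; f_equal; ring. Qed.

Lemma is_RInt_C0 : is_RInt (V:=CV) (fun _ => RtoC 0) 0 (2*PI) (RtoC 0).
Proof.
  assert (H := is_RInt_const (V:=CV) 0 (2*PI) (RtoC 0)).
  rewrite scal_R_Cmult, Cmult_0_r in H. exact H.
Qed.

Lemma is_RInt2_csum (Phi : nat -> R -> R -> C) (I : nat -> C) N :
  (forall i, is_RInt2 (Phi i) (I i)) ->
  is_RInt2 (fun t1 t2 => csum (fun i => Phi i t1 t2) N) (csum I N).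
Proof.
  intros H. induction N; simpl.
  - exists (fun _ => RtoC 0). split.
    + intros t1. exact is_RInt_C0.
    + exact is_RInt_C0.
  - apply is_RInt2_plus; auto.
Qed.

Definition uu (r t1 t2 : R) : C := ((expi t1 + expi t2) * RtoC (/ r))%C.
Definition PN (r : R) (N : nat) (t1 t2 : R) : C := csum (fun m => Cpow (uu r t1 t2) m) N.
Definition PhiN (r : R) (N : nat) (k1 k2 : Z) (t1 t2 : R) : C :=
  (expi (- (IZR k1 * t1 + IZR k2 * t2)) * RtoC (Cmod (PN r N t1 t2) ^ 2))%C.

Lemma expi_conj t : Cconj (expi t) = expi (- t).
Proof. unfold Cconj, expi; simpl. rewrite cos_neg, sin_neg. reflexivity. Qed.

Lemma PhiN_eq r N k1 k2 t1 t2 :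
  PhiN r N k1 k2 t1 t2 =
  csum (fun m => csum (fun n => RtoC (/ r ^ m * / r ^ n) * Phi m n k1 k2 t1 t2) N)%C N.
Proof.
  unfold PhiN. rewrite Cmod2_conj. unfold PN. rewrite csum_conj.
  rewrite csum_mult_r, csum_mult_l. apply csum_ext. intros m.
  rewrite csum_mult_l. rewrite (csum_mult_l (expi _)). apply csum_ext. intros n.
  rewrite Cpow_conj. unfold uu. rewrite Cmult_conj, Cplus_conj, !expi_conj.
  replace (Cconj (RtoC (/ r))) with (RtoC (/ r)) by (unfold Cconj, RtoC; simpl; f_equal; ring).
  rewrite !Cpow_mult_l, <- !RtoC_pow.
  rewrite !pow_inv. unfold Phi. rewrite RtoC_mult. ring.
Qed.

Lemma Cmod_expi t : Cmod (expi t) = 1.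
Proof. unfold Cmod, expi; simpl. replace (cos t * (cos t * 1) + sin t * (sin t * 1)) with 1. apply sqrt_1.
  pose proof (sin2_cos2 t) as H. unfold Rsqr in H. rewrite !Rmult_1_r. lra. Qed.

Lemma geom_C (u : C) N : (csum (fun m => Cpow u m) N * (1 - u))%C = (1 - Cpow u N)%C.
Proof. induction N; simpl. ring. rewrite Cmult_plus_distr_r, IHN. ring. Qed.

Lemma Cmod_1_minus_ge (z : C) : 1 - Cmod z <= Cmod (1 - z).
Proof.
  assert (H := Cmod_triangle (1 - z) z). replace (1 - z + z)%C with (RtoC 1) in H by ring.
  rewrite Cmod_1 in H. lra.
Qed.

Lemma Cmod_1_minus_le (z : C) : Cmod (1 - z) <= 1 + Cmod z.
Proof.
  assert (H := Cmod_triangle 1 (- z)). rewrite Cmod_1, Cmod_opp in H. exact H.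
Qed.

Lemma spec_density_eq r t1 t2 : r <> 0 ->
  spec_density r t1 t2 = / (Cmod (1 - uu r t1 t2) ^ 2).
Proof.
  intros Hr. unfold spec_density, p_poly, uu, Cdiv. rewrite RtoC_inv by exact Hr. reflexivity.
Qed.

Lemma uu_bound r t1 t2 : 2 < r -> Cmod (uu r t1 t2) <= 2 / r.
Proof.
  intros Hr. unfold uu. rewrite Cmod_mult, Cmod_R.
  rewrite Rabs_right by (apply Rle_ge, Rlt_le, Rinv_0_lt_compat; lra).
  assert (H := Cmod_triangle (expi t1) (expi t2)). rewrite !Cmod_expi in H.
  unfold Rdiv. apply Rmult_le_compat_r. apply Rlt_le, Rinv_0_lt_compat; lra. lra.
Qed.

Lemma PhiN_bound r N k1 k2 t1 t2 : 2 < r ->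
  Cmod (PhiN r N k1 k2 t1 t2 - expi (- (IZR k1 * t1 + IZR k2 * t2)) * RtoC (spec_density r t1 t2))
  <= 3 / (1 - 2 / r) ^ 2 * (2 / r) ^ N.
Proof.
  intros Hr. unfold PhiN.
  replace (expi (- (IZR k1 * t1 + IZR k2 * t2)) * RtoC (Cmod (PN r N t1 t2) ^ 2) -
           expi (- (IZR k1 * t1 + IZR k2 * t2)) * RtoC (spec_density r t1 t2))%C
    with (expi (- (IZR k1 * t1 + IZR k2 * t2)) * RtoC (Cmod (PN r N t1 t2) ^ 2 - spec_density r t1 t2))%C
    by (unfold RtoC, Cmult, Cminus, Cplus, Copp; simpl; f_equal; ring).
  rewrite Cmod_mult, Cmod_expi, Rmult_1_l, Cmod_R.
  rewrite spec_density_eq by lra.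
  set (u := uu r t1 t2). set (q := 2 / r).
  assert (Hq : 0 < q < 1).
  { unfold q. split. apply Rdiv_lt_0_compat; lra.
    replace (2/r) with (1 - (r-2)/r) by (field; lra).
    assert (0 < (r-2)/r) by (apply Rdiv_lt_0_compat; lra). lra. }
  assert (Hu : Cmod u <= q) by apply uu_bound, Hr.
  assert (HP : (PN r N t1 t2 * (1 - u))%C = (1 - Cpow u N)%C) by apply geom_C.
  set (c := Cmod (1 - u)). set (w := Cmod (1 - Cpow u N)). set (p := Cmod (PN r N t1 t2)).
  assert (Hpc : p * c = w) by (unfold p, c, w; rewrite <- Cmod_mult, HP; reflexivity).
  assert (Hc : 1 - q <= c) by (unfold c; assert (H:= Cmod_1_minus_ge u); lra).
  assert (HqN : Cmod (Cpow u N) <= q ^ N).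
  { rewrite Cmod_pow. apply pow_incr. split; [apply Cmod_ge_0|exact Hu]. }
  assert (HqN1 : q ^ N <= 1).
  { rewrite <- (pow1 N). apply pow_incr. lra. }
  assert (HqN0 : 0 <= q ^ N) by (apply pow_le; lra).
  assert (Hw1 : 1 - Cmod (Cpow u N) <= w) by apply Cmod_1_minus_ge.
  assert (Hw2 : w <= 1 + Cmod (Cpow u N)) by apply Cmod_1_minus_le.
  assert (Hc0 : 0 < c) by lra.
  assert (Ep : p ^ 2 - / c ^ 2 = (w - 1) * (w + 1) * / c ^ 2) by (rewrite <- Hpc; field; lra).
  rewrite Ep, !Rabs_mult.
  rewrite (Rabs_right (/ c ^ 2)) by (apply Rle_ge, Rlt_le, Rinv_0_lt_compat, pow_lt; lra).
  rewrite (Rabs_right (w + 1)) by lra.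
  assert (H1 : Rabs (w - 1) <= q ^ N) by (apply Rabs_le; lra).
  assert (H2 : / c ^ 2 <= / (1 - q) ^ 2).
  { apply Rinv_le_contravar. apply pow_lt; lra. apply pow_incr; lra. }
  assert (H3 : 0 <= / c ^ 2) by (apply Rlt_le, Rinv_0_lt_compat, pow_lt; lra).
  replace (3 / (1 - q) ^ 2 * q ^ N) with (q ^ N * 3 * / (1 - q) ^ 2) by (field; lra).
  apply Rmult_le_compat.
  - apply Rmult_le_pos; [apply Rabs_pos|lra].
  - exact H3.
  - apply Rmult_le_compat; [apply Rabs_pos| lra | exact H1 | lra].
  - exact H2.
Qed.

Definition Aseq (r : R) (k1 k2 : Z) (N : nat) : R :=
  rsum (fun m => rsum (fun n => / r ^ m * / r ^ n * Bc m n k1 k2) N) N.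

Lemma fourier_lim r k1 k2 (L : R) : 2 < r -> is_lim_seq (Aseq r k1 k2) L ->
  fourier_coef r k1 k2 = RtoC L.
Proof.
  intros Hr HL.
  set (Phi0 := fun t1 t2 => (expi (- (IZR k1 * t1 + IZR k2 * t2)) * RtoC (spec_density r t1 t2))%C).
  set (q := 2 / r).
  assert (Hq : 0 < q < 1).
  { unfold q. split. apply Rdiv_lt_0_compat; lra.
    replace (2/r) with (1 - (r-2)/r) by (field; lra).
    assert (0 < (r-2)/r) by (apply Rdiv_lt_0_compat; lra). lra. }
  destruct (unif_lim2 Phi0 (fun N => PhiN r N k1 k2) (fun N => RtoC (4 * PI ^ 2 * Aseq r k1 k2 N))
             (fun N => 3 / (1 - q) ^ 2 * q ^ N)) as [I [HI1 [HI2 HI3]]].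
  - intros N. eapply is_RInt2_ext. intros t1 t2. symmetry. apply PhiN_eq.
    replace (RtoC (4 * PI ^ 2 * Aseq r k1 k2 N)) with
      (csum (fun m => csum (fun n => RtoC (/ r ^ m * / r ^ n) * RtoC (4 * PI ^ 2 * Bc m n k1 k2)) N) N)%C.
    apply is_RInt2_csum. intros m. apply is_RInt2_csum. intros n.
    apply is_RInt2_scal. apply is_RInt2_Phi.
    unfold Aseq. rewrite RtoC_mult, RtoC_rsum, csum_mult_l. apply csum_ext. intros m.
    rewrite RtoC_rsum, csum_mult_l. apply csum_ext. intros n.
    rewrite !RtoC_mult. ring.
  - intros N t1 t2. unfold Phi0, q. apply PhiN_bound. exact Hr.
  - replace (Finite 0) with (Rbar_mult (3 / (1 - q) ^ 2) 0) by (simpl; f_equal; ring).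
    apply is_lim_seq_scal_l. apply is_lim_seq_geom. rewrite Rabs_right; lra.
  - assert (HI4 : filterlim (fun N => RtoC (4 * PI ^ 2 * Aseq r k1 k2 N)) eventually (locally (RtoC (4 * PI ^ 2 * L)))).
    { apply seq_lim_C with (d := fun N => Rabs (4 * PI ^ 2 * Aseq r k1 k2 N - 4 * PI ^ 2 * L)).
      - intros N. right. rewrite <- Cmod_R. f_equal. unfold RtoC, Cminus, Cplus, Copp; simpl; f_equal; ring.
      - apply (proj1 (is_lim_seq_abs_0 (fun N => 4 * PI ^ 2 * Aseq r k1 k2 N - 4 * PI ^ 2 * L))). replace (Finite 0) with (Rbar_minus (4 * PI ^ 2 * L) (4 * PI ^ 2 * L)) by (simpl; f_equal; ring).
        apply is_lim_seq_minus'. replace (Finite (4 * PI ^ 2 * L)) with (Rbar_mult (4 * PI ^ 2) L) by reflexivity.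
        apply is_lim_seq_scal_l. exact HL. apply is_lim_seq_const. }
    assert (EI : I = RtoC (4 * PI ^ 2 * L)).
    { apply (filterlim_locally_unique (V:=CV) _ _ _ HI3 HI4). }
    assert (Hf : RInt (V:=CV) (fun t1 => RInt (V:=CV) (fun t2 => Cmult (expi (- (IZR k1 * t1 + IZR k2 * t2))) (RtoC (spec_density r t1 t2))) 0 (2*PI)) 0 (2*PI) = I).
    { apply is_RInt_unique. exact HI2. }
    unfold fourier_coef. rewrite Hf, EI.
    rewrite <- RtoC_mult. f_equal. field. apply PI_neq0.
Qed.
Lemma Cz_neg M K : (K < 0)%Z -> Cz M K = 0.
Proof.
  revert K; induction M; intros K HK; simpl.
  - destruct (Z.eqb_spec K 0); [lia|reflexivity].
  - rewrite IHM, IHM by lia. ring.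
Qed.

Lemma Cz_big M K : (Z.of_nat M < K)%Z -> Cz M K = 0.
Proof.
  revert K; induction M; intros K HK; simpl.
  - destruct (Z.eqb_spec K 0); [lia|reflexivity].
  - rewrite IHM, IHM by lia. ring.
Qed.

Lemma Cz_nonneg M K : 0 <= Cz M K.
Proof.
  revert K; induction M; intros K; simpl.
  - destruct (Z.eqb K 0); lra.
  - specialize (IHM K) as H1. specialize (IHM (K-1)%Z) as H2. lra.
Qed.

Lemma Cz_le M K : Cz M K <= 2 ^ M.
Proof.
  revert K; induction M; intros K; simpl.
  - destruct (Z.eqb K 0); lra.
  - specialize (IHM K) as H1. specialize (IHM (K-1)%Z) as H2. lra.
Qed.

Lemma Cz_S M K : Cz (S M) K = Cz M K + Cz M (K - 1).
Proof. reflexivity. Qed.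

Lemma Cz_sym M K : Cz M K = Cz M (Z.of_nat M - K).
Proof.
  revert K; induction M; intros K.
  - unfold Cz. destruct (Z.eqb_spec K 0); destruct (Z.eqb_spec (Z.of_nat 0 - K) 0); try reflexivity; lia.
  - rewrite !Cz_S. rewrite (IHM K), (IHM (K-1)%Z).
    rewrite Rplus_comm. f_equal; f_equal; lia.
Qed.

Lemma Binom_n_0 n : Binomial.C n 0 = 1.
Proof. unfold Binomial.C. simpl. rewrite Nat.sub_0_r. field. apply INR_fact_neq_0. Qed.

Lemma Binom_n_n n : Binomial.C n n = 1.
Proof. unfold Binomial.C. rewrite Nat.sub_diag. simpl. field. apply INR_fact_neq_0. Qed.

Lemma Cz_binom M k : (k <= M)%nat -> Cz M (Z.of_nat k) = Binomial.C M k.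
Proof.
  revert k; induction M; intros k Hk.
  - assert (k = 0%nat) by lia. subst. simpl. rewrite Binom_n_0. reflexivity.
  - destruct k as [|k].
    + rewrite Cz_S. rewrite (Cz_neg M (Z.of_nat 0 - 1)) by lia. rewrite IHM by lia. rewrite !Binom_n_0. ring.
    + rewrite Cz_S. replace (Z.of_nat (S k) - 1)%Z with (Z.of_nat k) by lia.
      rewrite (IHM k) by lia.
      destruct (Nat.eq_dec k M) as [->|Hne].
      * rewrite Cz_big by lia. rewrite !Binom_n_n. ring.
      * rewrite (IHM (S k)) by lia. rewrite <- pascal by lia. ring.
Qed.
Lemma rsum_ext f g N : (forall i, (i < N)%nat -> f i = g i) -> rsum f N = rsum g N.
Proof. induction N; intros H; simpl. reflexivity. rewrite IHN; [rewrite H; [reflexivity|lia]|intros; apply H; lia]. Qed.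

Lemma rsum_single (x : nat -> R) j N :
  rsum (fun n => if Nat.eqb n j then x n else 0) N = if Nat.ltb j N then x j else 0.
Proof.
  induction N; simpl.
  - destruct (Nat.ltb_spec j 0); [lia|reflexivity].
  - rewrite IHN. destruct (Nat.eqb_spec N j); destruct (Nat.ltb_spec j N); destruct (Nat.ltb_spec j (S N));
    subst; try lia; ring.
Qed.

Lemma rsum_S f N : rsum f (S N) = rsum f N + f N.
Proof. reflexivity. Qed.

Lemma rsum_shift_le h D N :
  rsum (fun m => if Nat.leb D m then h (m - D)%nat else 0) N = rsum h (N - D).
Proof.
  induction N. reflexivity.
  rewrite rsum_S, IHN. destruct (Nat.leb_spec D N).
  - replace (S N - D)%nat with (S (N - D)) by lia. reflexivity.
  - replace (S N - D)%nat with 0%nat by lia. replace (N - D)%nat with 0%nat by lia. simpl. ring.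
Qed.

Lemma rsum_trunc h K N :
  rsum (fun m => if Nat.ltb m K then h m else 0) N = rsum h (Nat.min K N).
Proof.
  induction N. simpl. rewrite Nat.min_0_r. reflexivity.
  rewrite rsum_S, IHN. destruct (Nat.ltb_spec N K).
  - replace (Nat.min K (S N)) with (S (Nat.min K N)) by lia.
    replace (Nat.min K N) with N by lia. rewrite rsum_S. reflexivity.
  - replace (Nat.min K (S N)) with (Nat.min K N) by lia. ring.
Qed.

Definition tseq (r : R) (D : nat) (j : Z) (s : nat) : R :=
  / r ^ (2 * s + D) * Cz (2 * s + D) (Z.of_nat s + j).

Lemma Aseq_pos r k1 k2 D N : r <> 0 -> (k1 + k2 = Z.of_nat D)%Z ->
  Aseq r k1 k2 N = rsum (tseq r D k1) (N - D).
Proof.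
  intros Hr Hd. unfold Aseq. rewrite <- rsum_shift_le. apply rsum_ext. intros m Hm.
  transitivity (rsum (fun n => if Nat.eqb n (m - D) then (if Nat.leb D m then tseq r D k1 (m - D) else 0) else 0) N).
  - apply rsum_ext. intros n Hn. unfold Bc.
    destruct (Z.eqb_spec (Z.of_nat m - Z.of_nat n) (k1 + k2)).
    + assert (Hn' : n = (m - D)%nat) by lia. subst n.
      rewrite Nat.eqb_refl. destruct (Nat.leb_spec D m); [|lia].
      unfold tseq. replace (2 * (m - D) + D)%nat with (m + (m - D))%nat by lia.
      replace (Z.of_nat (m - D) + k1)%Z with (Z.of_nat (m - D) + k1)%Z by reflexivity.
      rewrite !pow_add, !Rinv_mult. ring.
    + destruct (Nat.eqb_spec n (m - D)); [|ring].
      destruct (Nat.leb_spec D m); [lia|ring].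
  - rewrite rsum_single. destruct (Nat.ltb_spec (m - D) N); [reflexivity|lia].
Qed.

Lemma Aseq_neg r k1 k2 D N : r <> 0 -> (k1 + k2 = - Z.of_nat D)%Z ->
  Aseq r k1 k2 N = rsum (tseq r D (- k2)) (N - D).
Proof.
  intros Hr Hd. unfold Aseq.
  replace (N - D)%nat with (Nat.min (N - D) N) by lia.
  rewrite <- rsum_trunc. apply rsum_ext. intros m Hm.
  transitivity (rsum (fun n => if Nat.eqb n (m + D) then tseq r D (- k2) m else 0) N).
  - apply rsum_ext. intros n Hn. unfold Bc.
    destruct (Z.eqb_spec (Z.of_nat m - Z.of_nat n) (k1 + k2)).
    + assert (Hn' : n = (m + D)%nat) by lia. subst n.
      rewrite Nat.eqb_refl.
      unfold tseq. replace (2 * m + D)%nat with (m + (m + D))%nat by lia.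
      replace (Z.of_nat m + - k2)%Z with (Z.of_nat (m + D) + k1)%Z by lia.
      rewrite !pow_add, !Rinv_mult. ring.
    + destruct (Nat.eqb_spec n (m + D)); [lia|ring].
  - rewrite rsum_single. destruct (Nat.ltb_spec (m + D) N); destruct (Nat.ltb_spec m (N - D)); try lia; reflexivity.
Qed.
Lemma rsum_sum_n t n : rsum t (S n) = sum_n t n.
Proof.
  induction n. simpl. rewrite sum_O. ring.
  rewrite rsum_S, IHn, sum_Sn. reflexivity.
Qed.

Lemma lim_rsum_shift (A : nat -> R) (t : nat -> R) D :
  (forall N, A N = rsum t (N - D)) -> ex_series t -> is_lim_seq A (Series t).
Proof.
  intros HA Ht. apply (is_lim_seq_incr_n A (S D)).
  apply is_lim_seq_ext with (u := sum_n t). intros n. rewrite HA. replace (n + S D - D)%nat with (S n) by lia.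
  symmetry. apply rsum_sum_n.
  apply Series_correct in Ht. exact Ht.
Qed.

Lemma q_bounds r : 2 < r -> 0 < 2 / r < 1.
Proof.
  intros Hr. split. apply Rdiv_lt_0_compat; lra.
  replace (2/r) with (1 - (r-2)/r) by (field; lra).
  assert (0 < (r-2)/r) by (apply Rdiv_lt_0_compat; lra). lra.
Qed.

Lemma tseq_bound r D j s : 2 < r ->
  0 <= tseq r D j s <= (2 / r) ^ D * ((2 / r) ^ 2) ^ s.
Proof.
  intros Hr. unfold tseq.
  assert (Hp : 0 < / r ^ (2 * s + D)) by (apply Rinv_0_lt_compat, pow_lt; lra).
  split.
  - apply Rmult_le_pos. lra. apply Cz_nonneg.
  - eapply Rle_trans. apply Rmult_le_compat_l. lra. apply Cz_le.
    rewrite <- pow_mult, <- pow_add, Rmult_comm.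
    replace (2 * s + D)%nat with (D + 2 * s)%nat by lia.
    unfold Rdiv. rewrite Rpow_mult_distr, pow_inv. right. ring.
Qed.

Lemma tseq_ex r D j : 2 < r -> ex_series (tseq r D j).
Proof.
  intros Hr. destruct (q_bounds r Hr) as [Hq0 Hq1].
  apply (ex_series_le (K:=R_AbsRing) (V:=R_CompleteNormedModule) _ (fun s => (2 / r) ^ D * ((2 / r) ^ 2) ^ s)).
  - intros s. change (norm (tseq r D j s)) with (Rabs (tseq r D j s)).
    destruct (tseq_bound r D j s Hr). rewrite Rabs_right by lra. exact H0.
  - apply (ex_series_scal_l (K:=R_AbsRing) (V:=R_CompleteNormedModule) ((2/r)^D) (fun s => ((2/r)^2)^s)).
    apply ex_series_geom. rewrite Rabs_right. 2: apply Rle_ge, pow_le; lra.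
    simpl. nra.
Qed.
Definition Hs (r : R) (K : nat) : R := Series (tseq r K 0).

Lemma Series_nonneg (a : nat -> R) : (forall n, 0 <= a n) -> ex_series a -> 0 <= Series a.
Proof.
  intros Ha He. replace 0 with (Series (fun n => 0 * a n)).
  apply Series_le; auto. intros n. split; [right; ring| rewrite Rmult_0_l; apply Ha].
  rewrite Series_scal_l. ring.
Qed.

Lemma Hs_rec r K : 2 < r -> r * Hs r (S K) = Hs r K + Hs r (S (S K)).
Proof.
  intros Hr.
  set (b := fun s => / r ^ (S (2 * s + K)) * Cz (2 * s + K) (Z.of_nat s + 0 - 1)).
  assert (Hpt : forall s, tseq r (S K) 0 s = / r * tseq r K 0 s + b s).
  { intros s. unfold tseq, b. replace (2 * s + S K)%nat with (S (2 * s + K)) by lia.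
    rewrite Cz_S. simpl pow. rewrite Rinv_mult. ring. }
  assert (Hb0 : b 0%nat = 0).
  { unfold b. rewrite Cz_neg by lia. ring. }
  assert (HbS : forall s, b (S s) = / r * tseq r (S (S K)) 0 s).
  { intros s. unfold b, tseq. replace (2 * S s + K)%nat with (2 * s + S (S K))%nat by lia.
    replace (Z.of_nat (S s) + 0 - 1)%Z with (Z.of_nat s + 0)%Z by lia.
    simpl pow. rewrite Rinv_mult. ring. }
  assert (Hbex : ex_series b).
  { apply (ex_series_le (K:=R_AbsRing) (V:=R_CompleteNormedModule) _ (tseq r (S K) 0)).
    - intros s. change (norm (b s)) with (Rabs (b s)).
      assert (0 <= b s).
      { unfold b. apply Rmult_le_pos. apply Rlt_le, Rinv_0_lt_compat, pow_lt; lra. apply Cz_nonneg. }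
      rewrite Rabs_right by lra. rewrite Hpt.
      assert (0 <= tseq r K 0 s) by (apply (tseq_bound r K 0 s Hr)).
      assert (0 <= / r) by (apply Rlt_le, Rinv_0_lt_compat; lra).
      assert (0 <= / r * tseq r K 0 s) by (apply Rmult_le_pos; lra). lra.
    - apply tseq_ex, Hr. }
  unfold Hs. rewrite (Series_ext _ _ Hpt).
  rewrite Series_plus.
  2: apply (ex_series_scal_l (K:=R_AbsRing) (V:=R_CompleteNormedModule) (/ r) (tseq r K 0)); apply tseq_ex, Hr.
  2: exact Hbex.
  rewrite Series_scal_l. rewrite (Series_incr_1_aux b Hb0).
  rewrite (Series_ext _ _ HbS), Series_scal_l. field. lra.
Qed.

Lemma Hs_1 r : 2 < r -> Hs r 0 = 1 + 2 / r * Hs r 1.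
Proof.
  intros Hr. unfold Hs. rewrite Series_incr_1 by (apply tseq_ex, Hr).
  replace (tseq r 0 0 0) with 1 by (unfold tseq; simpl; field).
  f_equal. rewrite <- Series_scal_l. apply Series_ext. intros s.
  unfold tseq. replace (2 * S s + 0)%nat with (S (2 * s + 1)) by lia.
  rewrite Cz_S. rewrite (Cz_sym (2 * s + 1) (Z.of_nat (S s) + 0)).
  replace (Z.of_nat (2 * s + 1) - (Z.of_nat (S s) + 0))%Z with (Z.of_nat s + 0)%Z by lia.
  replace (Z.of_nat (S s) + 0 - 1)%Z with (Z.of_nat s + 0)%Z by lia.
  simpl pow. rewrite Rinv_mult. unfold Rdiv. ring.
Qed.

Lemma Hs_bound r K : 2 < r -> 0 <= Hs r K <= (2 / r) ^ K / (1 - (2 / r) ^ 2).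
Proof.
  intros Hr. destruct (q_bounds r Hr) as [Hq0 Hq1]. set (q := 2 / r) in *.
  assert (Hq2 : 0 <= q ^ 2 < 1) by (simpl; nra).
  split.
  - apply Series_nonneg. intros n; apply (tseq_bound r K 0 n Hr). apply tseq_ex, Hr.
  - unfold Hs. eapply Rle_trans. apply Series_le. intros n. apply (tseq_bound r K 0 n Hr).
    apply (ex_series_scal_l (K:=R_AbsRing) (V:=R_CompleteNormedModule) (q ^ K) (fun s => (q^2)^s)).
    apply ex_series_geom. rewrite Rabs_right; lra.
    assert (Hg : Series (fun n => ((2/r)^2)^n) = / (1 - (2/r)^2)) by (apply is_series_unique, is_series_geom; rewrite Rabs_right; unfold q in Hq2; lra).
    rewrite (Series_scal_l ((2/r)^K) (fun n => ((2/r)^2)^n)), Hg. unfold q. right.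
    unfold Rdiv. reflexivity.
Qed.
Lemma Hs_closed r K0 : 2 < r ->
  Hs r K0 = / sqrt (1 - 4 / r ^ 2) * (r / 2 - sqrt (r ^ 2 / 4 - 1)) ^ K0.
Proof.
  intros Hr.
  assert (Hpos : 0 < r ^ 2 / 4 - 1) by (simpl; nra).
  set (sq := sqrt (r ^ 2 / 4 - 1)).
  assert (Hsq : sq * sq = r ^ 2 / 4 - 1) by (apply sqrt_sqrt; lra).
  assert (Hsq0 : 0 < sq) by (apply sqrt_lt_R0; lra).
  set (rho := r / 2 - sq).
  assert (Hrho1 : rho * (r - rho) = 1) by (unfold rho; simpl in Hsq; nra).
  assert (Hrho0 : 0 < rho).
  { unfold rho. assert (sq < r / 2) by (simpl in Hsq; nra). lra. }
  assert (Hrho2 : rho <= 1) by (unfold rho in *; nra).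
  destruct (q_bounds r Hr) as [Hq0 Hq1].
  set (q := 2 / r) in *.
  assert (Hq2 : 0 < 1 - q ^ 2) by (simpl; nra).
  set (D := fun K => Hs r (S K) - rho * Hs r K).
  assert (HD : forall K, D 0%nat = rho ^ K * D K).
  { induction K. simpl. ring. rewrite IHK. unfold D.
    assert (E := Hs_rec r K Hr).
    replace (Hs r (S (S K))) with (r * Hs r (S K) - Hs r K) by lra.
    replace (rho ^ S K * (r * Hs r (S K) - Hs r K - rho * Hs r (S K)))
      with (rho ^ K * ((rho * (r - rho)) * Hs r (S K) - rho * Hs r K)) by (simpl; ring).
    rewrite Hrho1. ring. }
  assert (HDb : forall K, Rabs (D 0%nat) <= 2 / (1 - q ^ 2) * q ^ K).
  { intros K. rewrite (HD K), Rabs_mult, Rabs_right by (apply Rle_ge, pow_le; lra).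
    assert (Hp : rho ^ K <= 1) by (rewrite <- (pow1 K); apply pow_incr; lra).
    assert (Hp0 : 0 <= rho ^ K) by (apply pow_le; lra).
    destruct (Hs_bound r K Hr) as [B1 B2]. destruct (Hs_bound r (S K) Hr) as [B3 B4].
    fold q in B2, B4.
    assert (HqK : 0 <= q ^ K) by (apply pow_le; lra).
    assert (Hq' : q ^ S K <= q ^ K) by (simpl; nra).
    assert (Hdk : Rabs (D K) <= 2 / (1 - q ^ 2) * q ^ K).
    { unfold D. apply Rabs_le. split.
      - assert (rho * Hs r K <= Hs r K) by nra.
        assert (Hs r K <= q ^ K / (1 - q ^ 2)) by exact B2.
        replace (2 / (1 - q ^ 2) * q ^ K) with (2 * (q ^ K / (1 - q ^ 2))) by (field; lra). lra.
      - assert (q ^ S K / (1 - q ^ 2) <= q ^ K / (1 - q ^ 2)).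
        { unfold Rdiv. apply Rmult_le_compat_r. apply Rlt_le, Rinv_0_lt_compat; lra. exact Hq'. }
        assert (0 <= rho * Hs r K) by nra.
        replace (2 / (1 - q ^ 2) * q ^ K) with (2 * (q ^ K / (1 - q ^ 2))) by (field; lra). lra. }
    assert (0 <= Rabs (D K)) by apply Rabs_pos. nra. }
  assert (HD0 : D 0%nat = 0).
  { assert (Hle : Rbar_le (Rabs (D 0%nat)) 0).
    { apply (is_lim_seq_le (fun _ => Rabs (D 0%nat)) (fun K => 2 / (1 - q ^ 2) * q ^ K)).
      - exact HDb.
      - apply is_lim_seq_const.
      - replace (Finite 0) with (Rbar_mult (2 / (1 - q ^ 2)) 0) by (simpl; f_equal; ring).
        apply is_lim_seq_scal_l. apply is_lim_seq_geom. rewrite Rabs_right; lra. }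
    simpl in Hle. apply Rabs_eq_0. apply Rle_antisym; auto. apply Rabs_pos. }
  assert (HDK : forall K, Hs r (S K) = rho * Hs r K).
  { intros K. assert (H := HD K). rewrite HD0 in H.
    assert (rho ^ K <> 0) by (apply pow_nonzero; lra).
    assert (D K = 0).
    { apply (Rmult_eq_reg_l (rho ^ K)); auto. rewrite <- H. ring. }
    unfold D in H1. lra. }
  assert (HK : forall K, Hs r K = rho ^ K * Hs r 0).
  { induction K. simpl; ring. rewrite HDK, IHK. simpl; ring. }
  assert (H0 : Hs r 0 = r / (2 * sq)).
  { assert (E := Hs_1 r Hr). rewrite (HDK 0%nat) in E. fold q in E.
    unfold q in E.
    assert (E' : Hs r 0 * r = r + 2 * rho * Hs r 0). { rewrite E at 1. field. lra. }
    unfold rho in E'.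
    apply (Rmult_eq_reg_l (2 * sq)). 2: lra.
    field_simplify. 2: lra. nra. }
  rewrite HK, H0.
  assert (Hs4 : sqrt (1 - 4 / r ^ 2) = 2 * sq / r).
  { replace (1 - 4 / r ^ 2) with ((2 * sq / r) ^ 2).
    apply sqrt_pow2. apply Rlt_le, Rdiv_lt_0_compat; lra.
    replace ((2 * sq / r) ^ 2) with (4 * (sq * sq) / r ^ 2) by (field; lra).
    rewrite Hsq. field. lra. }
  rewrite Hs4. field. split; lra.
Qed.
Lemma tseq_shift r D j e K : (2 * e + D = K)%nat ->
  (forall s, Cz (2 * (e + s) + D) (Z.of_nat (e + s) + j) = Cz (2 * s + K) (Z.of_nat s + 0)) ->
  (forall s, (s < e)%nat -> Cz (2 * s + D) (Z.of_nat s + j) = 0) ->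
  Series (tseq r D j) = Hs r K.
Proof.
  intros HK Hc Hz. unfold Hs.
  rewrite (Series_incr_n_aux (tseq r D j) e).
  - apply Series_ext. intros s. unfold tseq. rewrite Hc. f_equal. f_equal. f_equal. lia.
  - intros k Hk. unfold tseq. rewrite Hz by exact Hk. ring.
Qed.

Lemma poch_1 n : poch 1 n = INR (fact n).
Proof.
  induction n. reflexivity.
  simpl poch. rewrite IHn. rewrite fact_simpl, mult_INR, S_INR. ring.
Qed.

Lemma poch_nat a n : poch (INR a + 1) n = INR (fact (a + n)) / INR (fact a).
Proof.
  induction n. simpl. rewrite Nat.add_0_r. field. apply INR_fact_neq_0.
  simpl poch. rewrite IHn. replace (a + S n)%nat with (S (a + n)) by lia.
  rewrite fact_simpl, mult_INR, S_INR, plus_INR. field. apply INR_fact_neq_0.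
Qed.

Lemma poch_half K n :
  poch (INR K / 2 + 1) n * poch ((INR K + 1) / 2) n * 4 ^ n = INR (fact (K + 2 * n)) / INR (fact K).
Proof.
  induction n. simpl. rewrite Nat.add_0_r. field. apply INR_fact_neq_0.
  simpl poch.
  transitivity (poch (INR K / 2 + 1) n * poch ((INR K + 1) / 2) n * 4 ^ n *
     ((INR K / 2 + 1 + INR n) * ((INR K + 1) / 2 + INR n) * 4)).
  simpl pow. ring.
  rewrite IHn. replace (K + 2 * S n)%nat with (S (S (K + 2 * n))) by lia.
  rewrite (fact_simpl (S (K + 2 * n))), (fact_simpl (K + 2 * n)), !mult_INR, !S_INR, plus_INR, mult_INR.
  simpl INR. field. apply INR_fact_neq_0.
Qed.

Lemma tseq_hyp r K1 K2 : 2 < r ->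
  Series (tseq r (K1 + K2) (Z.of_nat K1)) =
  Binomial.C (K1 + K2) K1 / r ^ (K1 + K2) *
  hyp3F2 1 (INR (K1 + K2) / 2 + 1) ((INR (K1 + K2) + 1) / 2) (INR K1 + 1) (INR K2 + 1) (4 / r ^ 2).
Proof.
  intros Hr. unfold hyp3F2. rewrite <- Series_scal_l. apply Series_ext. intros n.
  set (K := (K1 + K2)%nat).
  unfold tseq. replace (Z.of_nat n + Z.of_nat K1)%Z with (Z.of_nat (n + K1)) by lia.
  rewrite Cz_binom by (unfold K; lia).
  rewrite !poch_nat.
  replace (poch 1 n * poch (INR K / 2 + 1) n * poch ((INR K + 1) / 2) n)
    with (poch 1 n * (poch (INR K / 2 + 1) n * poch ((INR K + 1) / 2) n * 4 ^ n) / 4 ^ n)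
    by (field; apply pow_nonzero; lra).
  rewrite poch_half, poch_1.
  unfold Binomial.C.
  replace (2 * n + K - (n + K1))%nat with (K2 + n)%nat by (unfold K; lia).
  replace (K - K1)%nat with K2 by (unfold K; lia).
  replace (K + 2 * n)%nat with (2 * n + K)%nat by lia.
  replace (n + K1)%nat with (K1 + n)%nat by lia.
  rewrite pow_add. rewrite pow_mult.
  unfold Rdiv. rewrite Rpow_mult_distr, pow_inv.
  assert (r ^ K <> 0) by (apply pow_nonzero; lra).
  assert ((r ^ 2) ^ n <> 0) by (apply pow_nonzero; apply pow_nonzero; lra).
  assert (4 ^ n <> 0) by (apply pow_nonzero; lra).
  pose proof (INR_fact_neq_0 n). pose proof (INR_fact_neq_0 K).
  pose proof (INR_fact_neq_0 K1). pose proof (INR_fact_neq_0 K2).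
  pose proof (INR_fact_neq_0 (K1 + n)). pose proof (INR_fact_neq_0 (K2 + n)).
  pose proof (INR_fact_neq_0 (2 * n + K)).
  field. repeat split; auto.
Qed.
Lemma coef_pos r k1 k2 D : 2 < r -> (k1 + k2 = Z.of_nat D)%Z ->
  fourier_coef r k1 k2 = RtoC (Series (tseq r D k1)).
Proof.
  intros Hr Hd. apply fourier_lim. exact Hr.
  apply lim_rsum_shift with D. intros N. apply Aseq_pos; [lra|exact Hd].
  apply tseq_ex, Hr.
Qed.

Lemma coef_neg r k1 k2 D : 2 < r -> (k1 + k2 = - Z.of_nat D)%Z ->
  fourier_coef r k1 k2 = RtoC (Series (tseq r D (- k2))).
Proof.
  intros Hr Hd. apply fourier_lim. exact Hr.
  apply lim_rsum_shift with D. intros N. apply Aseq_neg; [lra|exact Hd].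
  apply tseq_ex, Hr.
Qed.

Theorem theorem1 (r : R) (hr : 2 < r) (k1 k2 : Z) :
  let a1 := Z.abs_nat k1 in
  let a2 := Z.abs_nat k2 in
  ((k1 * k2 <= 0)%Z ->
     fourier_coef r k1 k2 =
     RtoC (/ sqrt (1 - 4 / r ^ 2) * (r / 2 - sqrt (r ^ 2 / 4 - 1)) ^ (a1 + a2)))
  /\
  ((0 < k1 * k2)%Z ->
     fourier_coef r k1 k2 =
     RtoC (Binomial.C (a1 + a2) a1 / r ^ (a1 + a2) *
           hyp3F2 1 (INR (a1 + a2) / 2 + 1) ((INR (a1 + a2) + 1) / 2)
                  (INR a1 + 1) (INR a2 + 1) (4 / r ^ 2))).
Proof.
  intros a1 a2.
  assert (H1 : Z.of_nat a1 = Z.abs k1) by (unfold a1; lia).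
  assert (H2 : Z.of_nat a2 = Z.abs k2) by (unfold a2; lia).
  clearbody a1 a2.
  split.
  - intros Hk. rewrite <- Hs_closed by exact hr.
    destruct (Z_le_gt_dec 0 k1) as [Hk1|Hk1]; destruct (Z_le_gt_dec 0 k2) as [Hk2|Hk2];
      destruct (Z_le_gt_dec 0 (k1 + k2)) as [Hsum|Hsum].
    all: try (assert (Hz0 : (k1 = 0 \/ k2 = 0)%Z) by nia; destruct Hz0 as [Hz0|Hz0]).
    all: try first
      [ (assert (0 < k1 * k2)%Z by nia; lia)
      | lia
      | (rewrite (coef_pos r k1 k2 (a1 - a2)) by (auto; lia);
         f_equal; apply tseq_shift with (e := a2);
         [ lia | intros s; rewrite Cz_sym; f_equal; lia | intros s Hs'; apply Cz_big; lia ])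
      | (rewrite (coef_neg r k1 k2 (a2 - a1)) by (auto; lia);
         f_equal; apply tseq_shift with (e := a1);
         [ lia | intros s; rewrite Cz_sym; f_equal; lia | intros s Hs'; apply Cz_big; lia ])
      | (rewrite (coef_pos r k1 k2 (a2 - a1)) by (auto; lia);
         f_equal; apply tseq_shift with (e := a1);
         [ lia | intros s; f_equal; lia | intros s Hs'; apply Cz_neg; lia ])
      | (rewrite (coef_neg r k1 k2 (a1 - a2)) by (auto; lia);
         f_equal; apply tseq_shift with (e := a2);
         [ lia | intros s; f_equal; lia | intros s Hs'; apply Cz_neg; lia ]) ].
  - intros Hk.
    destruct (Z_le_gt_dec 0 k1) as [Hk1|Hk1].
    + assert (0 < k2)%Z by nia.
      rewrite (coef_pos r k1 k2 (a1 + a2)) by (auto; lia).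
      f_equal. replace k1 with (Z.of_nat a1) by lia. apply tseq_hyp, hr.
    + assert (k2 < 0)%Z by nia.
      rewrite (coef_neg r k1 k2 (a1 + a2)) by (auto; lia).
      f_equal. rewrite <- tseq_hyp by exact hr.
      apply Series_ext. intros s. unfold tseq. f_equal.
      rewrite Cz_sym. f_equal; lia.
Qed.
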